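(* Let $\widehat q\in L_2(0,\pi)$ be real valued and such that $0$ is an eigenvalue of the problem $-y''+\widehat q(x)y=\lambda y$, $y(0)=y'(\pi)=0$. Let $\widehat S(\rho,x)$ be the solution of $-y''+\widehat qy=\rho^2y$ with $\widehat S(\rho,0)=0$, $\widehat S'(\rho,0)=1$, let $\widehat s_0(x)=3(\widehat S(0,x)/x-1)$ and $\widehat\sigma_0(x)=\widehat s_0(x)/x+\widehat s_0'(x)-\frac32\int_0^x\widehat q(t)\,dt$ (the first NSBF coefficients of $\widehat S$ and $\widehat S'$), and let $\widehat\omega=\frac12\int_0^\pi\widehat q(t)\,dt$. Then $$\widehat\omega=-\frac{\widehat\sigma_0(\pi)}{3}-\frac1\pi.$$ Consequently, for every eigenvalue $\widehat\rho_k^2$ ($\widehat\rho_k>0$) of this problem, the NSBF coefficients $\widehat\sigma_n(\pi)$ of $\widehat S'(\rho,\pi)$ satisfy $$\left(\mathbf j_1(\widehat\rho_k\pi)-\frac{\sin(\widehat\rho_k\pi)}3\right)\widehat\sigma_0(\pi)+\sum_{n=1}^\infty(-1)^n\widehat\sigma_n(\pi)\mathbf j_{2n+1}(\widehat\rho_k\pi)=-\widehat\rho_k\cos(\widehat\rho_k\pi)+\frac{\sin(\widehat\rho_k\pi)}{\pi}.$$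
   Context: $\mathbf j_k$ denotes the spherical Bessel function of the first kind of order $k$. For real $\widehat q\in L_2(0,\pi)$ it is known that $\widehat S'(\rho,x)=\cos(\rho x)+\frac1{2\rho}\left(\int_0^x\widehat q(t)dt\right)\sin(\rho x)+\frac1\rho\sum_{n=0}^\infty(-1)^n\widehat\sigma_n(x)\mathbf j_{2n+1}(\rho x)$ (NSBF representation), with $\rho$-independent coefficients $\widehat\sigma_n(x)$ and $\widehat\sigma_0$ as given, convergent for all $\rho\in\mathbb C$. *)

(* Defs.v *)
From HB Require Import structures.
From mathcomp Require Import all_boot all_order all_algebra.
From mathcomp Require Import all_classical all_reals all_analysis.
Set Implicit Arguments. Unset Strict Implicit. Unset Printing Implicit Defensive.
Import Order.TTheory GRing.Theory Num.Theory.
Import numFieldNormedType.Exports.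
Local Open Scope classical_set_scope.
Local Open Scope ring_scope.

Section Defs.
Variable R : realType.

Definition integ (a b : R) (f : R -> R) : R :=
  Rintegral (@lebesgue_measure R) `[a, b] f.

Definition L2_0pi (q : R -> R) : Prop :=
  measurable_fun `[0, pi] q /\
  (\int[@lebesgue_measure R]_(x in `[0%R, pi%R]) ((q x) ^+ 2)%:E < +oo)%E.

(* (y, dy) is a solution on [0,pi] of -y'' + q y = lam y, with dy = y'
   (y' absolutely continuous, equation a.e.), written in the equivalent
   integral (Caratheodory) form. *)
Definition is_sol (q : R -> R) (lam : R) (y dy : R -> R) : Prop :=
  {within `[0, pi], continuous y} /\ {within `[0, pi], continuous dy} /\
  forall x, 0 <= x <= pi ->
    y x = y 0 + integ 0 x dy /\
    dy x = dy 0 + integ 0 x (fun t => (q t - lam) * y t).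

Definition is_eigenvalue (q : R -> R) (lam : R) : Prop :=
  exists y dy : R -> R, is_sol q lam y dy /\ y 0 = 0 /\ dy pi = 0 /\
    exists x, 0 <= x <= pi /\ y x != 0.

(* Spherical Bessel function of the first kind (power series):
   j_k(z) = 2^k z^k sum_m (-1)^m (m+k)! z^(2m) / (m! (2m+2k+1)!). *)
Definition sbessel_term (k : nat) (z : R) (m : nat) : R :=
  (-1) ^+ m * 2 ^+ k * ((m + k)`!)%:R * z ^+ (k + 2 * m)
    / ((m`!)%:R * ((2 * m + 2 * k + 1)`!)%:R).

Definition sbessel (k : nat) (z : R) : R :=
  limn (series (sbessel_term k z)).

End Defs.

(* Main.v *)
Require Import Defs.
From HB Require Import structures.
From mathcomp Require Import all_boot all_order all_algebra.
From mathcomp Require Import all_classical all_reals all_analysis.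
From mathcomp Require Import measurable_realfun lra ring.
Import Order.TTheory GRing.Theory Num.Theory.
Import numFieldNormedType.Exports.
Local Open Scope classical_set_scope.
Local Open Scope ring_scope.

Set Implicit Arguments. Unset Strict Implicit.
Section S.
Variable R : realType.
Notation mu := (@lebesgue_measure R).

Lemma cont_int (f : R -> R) (a b : R) :
  {within `[a, b], continuous f} -> mu.-integrable `[a, b] (EFin \o f).
Proof.
move=> cf; apply: continuous_compact_integrable => //; exact: segment_compact.
Qed.

Lemma int_q (q : R -> R) : L2_0pi q -> mu.-integrable `[0, pi] (EFin \o q).
Proof.
case=> mq fq.
have i2 : mu.-integrable `[0, pi] (EFin \o (fun x => q x ^+ 2)).
  apply/integrableP; split.
    by apply/measurable_EFinP; apply: measurable_funX.
  under eq_integral do rewrite /= ger0_norm ?sqr_ge0//.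
  exact: fq.
have i1 : mu.-integrable `[0, pi] (EFin \o (fun x => 1 + q x ^+ 2)).
  have c1 : mu.-integrable `[0, pi] (EFin \o (fun=> (1:R))).
    by apply: cont_int; exact: cst_continuous.
  have := integrableD _ c1 i2.
  move=> /(_ ltac:(by [])) h; apply: eq_integrable h => //= x _.
apply: le_integrable i1 => //.
  by apply/measurable_EFinP.
move=> x _ /=; rewrite lee_fin.
have h0 : 0 <= 1 + q x ^+ 2 by rewrite addr_ge0 ?sqr_ge0.
rewrite (ger0_norm h0).
case: (lerP 0 (q x)) => h; [rewrite ger0_norm // | rewrite ltr0_norm //]; nra.
Qed.

Lemma cont_mul_int (p f : R -> R) (a b : R) :
  mu.-integrable `[a, b] (EFin \o p) -> {within `[a, b], continuous f} ->
  mu.-integrable `[a, b] (EFin \o (fun t => p t * f t)).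
Proof.
move=> ip cf.
have mf : measurable_fun `[a, b] f.
  exact: subspace_continuous_measurable_fun.
have bf : [bounded f x | x in `[a, b]].
  have /compact_bounded[M [_ mrt]] := continuous_compact cf (@segment_compact _ a b).
  by exists M; split; rewrite ?num_real // => ? ? ? ?; exact: mrt.
have := integrableMl _ ip mf bf.
move=> /(_ ltac:(by [])).
by apply: eq_integrable => //= x _; rewrite EFinM.
Qed.

Lemma integ_split (f : R -> R) (a x : R) : 0 <= a -> a <= x ->
  mu.-integrable `[0, x] (EFin \o f) ->
  integ 0 x f - integ 0 a f = \int[mu]_(t in `]a, x]) f t.
Proof.
move=> a0 ax fi; rewrite /integ.
by apply: Rintegral_itvB; rewrite ?bnd_simp.
Qed.

Lemma int_abs (f : R -> R) (D : set R) : measurable D ->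
  mu.-integrable D (EFin \o f) -> mu.-integrable D (EFin \o (fun t => `|f t|)).
Proof.
move=> mD fi; have := integrable_abse fi.
by apply: eq_integrable => //= x _.
Qed.

Lemma integ_bound (f : R -> R) (a b M : R) : a <= b ->
  mu.-integrable `]a, b] (EFin \o f) ->
  (forall t, a < t <= b -> `|f t| <= M) ->
  `|\int[mu]_(t in `]a, b]) f t| <= M * (b - a).
Proof.
move=> ab fi fM.
apply: (le_trans (le_normr_Rintegral _ _)) => //.
have ci : mu.-integrable `]a, b] (EFin \o (fun=> M)).
  apply: (@integrableS _ _ _ mu `[a, b]) => //.
    by apply: subset_itvr; rewrite bnd_simp.
  by apply: cont_int; exact: cst_continuous.
have := @le_Rintegral _ _ _ mu `]a, b] (fun t => `|f t|) (fun=> M) (measurable_itv _) (@int_abs f _ (measurable_itv _) fi) ci.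
move=> /(_ _) h; apply: (le_trans (h _)).
  by move=> t; rewrite /= in_itv /= => /fM.
rewrite Rintegral_cst //.
have := @lebesgue_measure_itv R `]a, b]; rewrite /= => E; rewrite E lte_fin.
case: ltP => hab /=; first by [].
have -> : b = a by apply: le_anti; rewrite hab ab.
by rewrite subrr.
Qed.

Lemma abs_cont (f : R -> R) (A : set R) :
  {within A, continuous f} -> {within A, continuous (fun t => `|f t|)}.
Proof.
move=> cf x; apply: continuous_comp; first exact: cf.
exact: norm_continuous.
Qed.

Lemma step (p f g : R -> R) (d : R) :
  mu.-integrable `[0, pi] (EFin \o p) ->
  {within `[0, pi], continuous f} -> {within `[0, pi], continuous g} ->
  (forall x, 0 <= x <= pi -> f x = integ 0 x g /\
                            g x = integ 0 x (fun t => p t * f t)) ->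
  0 < d -> d <= 1/2 ->
  (forall a b, 0 <= a -> a <= b -> b <= pi -> b - a <= d ->
     \int[mu]_(t in `]a, b]) `|p t| <= 1/2) ->
  forall a, 0 <= a ->
  (forall x, 0 <= x <= pi -> x <= a -> f x = 0 /\ g x = 0) ->
  (forall x, 0 <= x <= pi -> x <= a + d -> f x = 0 /\ g x = 0).
Proof.
move=> ip cf cg H d0 d12 hd a a0 IH x /andP[x0 xpi] xad.
have [pia|api] := leP pi a; first by apply: IH; rewrite ?x0 ?xpi ?(le_trans xpi).
have [xa|ax] := leP x a; first by apply: IH; rewrite ?x0.
set b := Num.min (a + d) pi.
have ab : a <= b by rewrite /b le_min (ltW api) lerDl ltW.
have bpi : b <= pi by rewrite /b ge_min lexx orbT.
have bad : b - a <= d by rewrite /b lerBlDl ge_min lexx.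
have sab : `[a, b] `<=` `[0, pi].
  by apply: subset_itv; rewrite bnd_simp.
have [c1 c1ab Mg'] := EVT_max ab (continuous_subspaceW sab (abs_cont cf)).
have [c2 c2ab Mg] := EVT_max ab (continuous_subspaceW sab (abs_cont cg)).
have fa : f a = 0 /\ g a = 0 by apply: IH; rewrite ?a0 ?(ltW api).
have ig : mu.-integrable `[0, pi] (EFin \o g) by exact: cont_int.
have ipf : mu.-integrable `[0, pi] (EFin \o (fun t => p t * f t)).
  exact: cont_mul_int.
have key : forall y, a <= y <= b ->
    `|f y| <= `|g c2| / 2 /\ `|g y| <= `|f c1| / 2.
  move=> y /andP[ay yb].
  have y0 : 0 <= y <= pi by rewrite (le_trans a0 ay) (le_trans yb bpi).
  have s0y : `[0, y] `<=` `[0, pi].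
    by apply: subset_itv; rewrite bnd_simp ?(le_trans yb bpi).
  have s_ay : `]a, y] `<=` `[0, pi].
    by apply: subset_itv; rewrite bnd_simp ?(le_trans yb bpi).
  have ina : forall t, a < t <= y -> t \in `[a, b].
    move=> t /andP[ha ty]; rewrite in_itv /= (ltW ha) /=.
    exact: le_trans ty yb.
  have [Ef Eg] := H y y0.
  have [Efa Ega] := H a ltac:(by rewrite a0 (ltW api)).
  split.
  - have -> : f y = \int[mu]_(t in `]a, y]) g t.
      rewrite -integ_split //; last exact: integrableS ig.
      by rewrite -Ef -Efa fa.1 subr0.
    apply: (le_trans (integ_bound (M := `|g c2|) ay _ _)).
    + exact: integrableS ig.
    + by move=> t /ina /Mg.
    rewrite ler_wpM2l //; lra.
  - have -> : g y = \int[mu]_(t in `]a, y]) (p t * f t).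
      rewrite -integ_split //; last exact: integrableS ipf.
      by rewrite -Eg -Ega fa.2 subr0.
    have ipfay : mu.-integrable `]a, y] (EFin \o (fun t => p t * f t)).
      exact: integrableS ipf.
    have ipay : mu.-integrable `]a, y] (EFin \o (fun t => `|p t|)).
      apply: int_abs => //; exact: integrableS ip.
    have ikp : mu.-integrable `]a, y] (EFin \o (fun t => `|f c1| * `|p t|)).
      have := integrableZl _ (`|f c1|) ipay.
      move=> /(_ ltac:(by [])).
      by apply: eq_integrable => //= t _; rewrite EFinM.
    apply: (le_trans (le_normr_Rintegral _ ipfay)) => //.
    apply: (le_trans (le_Rintegral _ (int_abs _ ipfay) ikp _)) => //.
      move=> t /= tay; rewrite normrM mulrC ler_wpM2r //.
      by apply: Mg'; apply: ina; move: tay; rewrite /= in_itv.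
    rewrite RintegralZl // ler_wpM2l // -div1r.
    apply: hd => //; [exact: le_trans yb bpi | lra].
have [k1 _] := key c1 ltac:(by move: c1ab; rewrite in_itv).
have [_ k2] := key c2 ltac:(by move: c2ab; rewrite in_itv).
have n1 := normr_ge0 (f c1); have n2 := normr_ge0 (g c2).
have xb : a <= x <= b by rewrite (ltW ax) /b le_min xad xpi.
have [kx1 kx2] := key x xb.
have h1 : `|f x| <= 0 by lra.
have h2 : `|g x| <= 0 by lra.
by split; apply/normr0_eq0/le_anti; rewrite ?h1 ?h2 normr_ge0.
Qed.

Lemma uniq0 (p f g : R -> R) :
  mu.-integrable `[0, pi] (EFin \o p) ->
  {within `[0, pi], continuous f} -> {within `[0, pi], continuous g} ->
  (forall x, 0 <= x <= pi -> f x = integ 0 x g /\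
                            g x = integ 0 x (fun t => p t * f t)) ->
  forall x, 0 <= x <= pi -> f x = 0 /\ g x = 0.
Proof.
move=> ip cf cg H.
have ipT : mu.-integrable setT (EFin \o (p \_ `[0, pi])).
  rewrite -restrict_EFin; apply: (proj1 (integrable_mkcond _ _) ip) => //.
have [e [e0 he]] := integral_normr_continuous ipT (e := 1/2) ltac:(lra).
set d := Num.min (e / 2) (1 / 2).
have d0 : 0 < d by rewrite /d lt_min; apply/andP; split; lra.
have d12 : d <= 1 / 2 by rewrite /d ge_min lexx orbT.
have de : d < e.
  by apply: (le_lt_trans (y := e / 2)); [rewrite /d ge_min lexx | lra].
have hd : forall a b, 0 <= a -> a <= b -> b <= pi -> b - a <= d ->
     \int[mu]_(t in `]a, b]) `|p t| <= 1/2.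
  move=> a b a0 ab bpi bad.
  rewrite (@eq_Rintegral _ _ _ mu _ (fun t => `|(p \_ `[0, pi]) t|)).
    apply/ltW/he => //.
    have := @lebesgue_measure_itv R `]a, b]; rewrite /= => E; rewrite E.
    case: ifP => _; last by rewrite lte_fin.
    by rewrite -EFinD lte_fin; lra.
  move=> t; rewrite inE /= in_itv /= => /andP[ha tb].
  rewrite patchE ifT // inE /= in_itv /=.
  by rewrite (le_trans a0 (ltW ha)) (le_trans tb bpi).
have P0 : forall x, 0 <= x <= pi -> x <= 0 -> f x = 0 /\ g x = 0.
  move=> x /andP[x0 xpi] xle.
  have x00 : x = 0 by apply: le_anti; rewrite xle x0.
  have [Ef Eg] := H x ltac:(by rewrite x0 xpi).
  by rewrite Ef Eg /integ x00 set_itv1 !Rintegral_set1.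
have Pn : forall n : nat, forall x, 0 <= x <= pi -> x <= n%:R * d ->
    f x = 0 /\ g x = 0.
  elim=> [|n IH]; first by move=> x hx; rewrite mul0r; exact: P0.
  move=> x hx; rewrite -addn1 natrD mulrDl mul1r => hxn.
  apply: (step ip cf cg H d0 d12 hd _ IH) => //.
  by rewrite mulr_ge0 // ltW.
move=> x hx.
apply: (Pn (Num.trunc (pi / d)).+1) => //.
have := truncnS_gt (pi / d) => h.
case/andP: hx => _ xpi; apply: (le_trans xpi).
rewrite -ler_pdivrMr //; exact: ltW.
Qed.

Lemma sub_cont (A : set R) (y S : R -> R) (c : R) :
  {within A, continuous y} -> {within A, continuous S} ->
  {within A, continuous (fun t => y t - c * S t)}.
Proof.
move=> hy hS x; apply: cvgB; first exact: hy.
apply: cvgM; [exact: cvg_cst | exact: hS].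
Qed.

Lemma eig_dS (q : R -> R) (lam : R) (y dy S dS : R -> R) :
  mu.-integrable `[0, pi] (EFin \o q) ->
  is_sol q lam y dy -> y 0 = 0 -> dy pi = 0 ->
  (exists x, 0 <= x <= pi /\ y x != 0) ->
  is_sol q lam S dS -> S 0 = 0 -> dS 0 = 1 -> dS pi = 0.
Proof.
move=> iq [cy [cdy Hy]] y0 dypi [x0 [hx0 yx0]] [cS [cdS HS]] S0 dS0.
set p := fun t => q t - lam.
have ip : mu.-integrable `[0, pi] (EFin \o p).
  have c1 : mu.-integrable `[0, pi] (EFin \o (fun=> lam)).
    by apply: cont_int; exact: cst_continuous.
  have := integrableB _ iq c1; move=> /(_ ltac:(by [])).
  by apply: eq_integrable => //= t _; rewrite EFinB.
set c := dy 0.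
set z := fun t => y t - c * S t.
set dz := fun t => dy t - c * dS t.
have sub0 : forall x : R, 0 <= x <= pi -> `[0, x] `<=` `[0, pi].
  by move=> x /andP[_ xpi]; apply: subset_itv; rewrite bnd_simp.
have Hz : forall x : R, 0 <= x <= pi -> z x = integ 0 x dz /\
                            dz x = integ 0 x (fun t => p t * z t).
  move=> x hx; have [Ey Edy] := Hy x hx; have [ES EdS] := HS x hx.
  have idy : mu.-integrable `[0, x] (EFin \o dy).
    by apply: integrableS (cont_int cdy) => //; exact: sub0.
  have idS : mu.-integrable `[0, x] (EFin \o dS).
    by apply: integrableS (cont_int cdS) => //; exact: sub0.
  have iqy : mu.-integrable `[0, x] (EFin \o (fun t => p t * y t)).
    by apply: integrableS (cont_mul_int ip cy) => //; exact: sub0.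
  have iqS : mu.-integrable `[0, x] (EFin \o (fun t => p t * S t)).
    by apply: integrableS (cont_mul_int ip cS) => //; exact: sub0.
  split.
  - rewrite /z Ey ES y0 S0 !add0r /integ.
    rewrite /dz RintegralB //; last first.
      have := integrableZl _ c idS.
      move=> /(_ ltac:(by [])).
      by apply: eq_integrable => //= t _; rewrite EFinM.
    by rewrite RintegralZl.
  - rewrite /dz Edy EdS dS0 -/c /integ.
    rewrite [RHS](@eq_Rintegral _ _ _ mu _ (fun t => p t * y t - c * (p t * S t))); last first.
      by move=> t _; rewrite /z /p; ring.
    rewrite RintegralB //; last first.
    + have := integrableZl _ c iqS.
      move=> /(_ ltac:(by [])).
      by apply: eq_integrable => //= t _; rewrite EFinM.
    rewrite RintegralZl //.
    rewrite /p /=; ring.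
have cz : {within `[0, pi], continuous z} by exact: sub_cont.
have cdz : {within `[0, pi], continuous dz} by exact: sub_cont.
have U := uniq0 ip cz cdz Hz.
have [cz0|cnz] := eqVneq c 0.
  have [zx _] := U x0 hx0.
  have e : y x0 = z x0 + c * S x0 by rewrite /z; ring.
  by move: yx0; rewrite e zx cz0 mul0r addr0 eqxx.
have [_ dzpi] := U pi ltac:(by rewrite pi_ge0 lexx).
move: dzpi; rewrite /dz dypi sub0r => /eqP; rewrite oppr_eq0 mulf_eq0 (negbTE cnz) /=.
by move/eqP.
Qed.
Lemma left_deriv0 (S dS : R -> R) : {within `[0, pi], continuous dS} ->
  (forall x, 0 <= x <= pi -> S x = S 0 + integ 0 x dS) -> dS pi = 0 ->
  (fun h => (S (pi + h) - S pi) / h) @ 0^'- --> (0:R).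
Proof.
move=> cdS HS dpi.
have pi0 : (0:R) < pi := pi_gt0 R.
have [_ _ hl] := (continuous_within_itvP dS pi0).1 cdS.
rewrite dpi in hl.
apply/cvgrPdist_le => e e0.
have := (cvgrPdist_le _ _).1 hl e e0.
case=> eta /= eta0 Heta.
exists (Num.min eta pi); first by rewrite /= lt_min eta0 pi0.
move=> h /= hb hneg.
rewrite add0r normrN ltr0_norm // in hb.
have := hb; rewrite lt_min => /andP[heta hpi].
have hpi0 : 0 <= pi + h by lra.
have ih : mu.-integrable `[0, pi] (EFin \o dS) by exact: cont_int.
have E : S (pi + h) - S pi = - \int[mu]_(t in `]pi + h, pi]) dS t.
  rewrite -integ_split //; last lra.
  rewrite (HS (pi + h)); last by rewrite hpi0 /=; lra.
  rewrite (HS pi); last by rewrite pi_ge0 lexx.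
  ring.
rewrite E add0r normrN normrM normrN normfV (ltr0_norm hneg).
have ih2 : mu.-integrable `]pi + h, pi] (EFin \o dS).
  by apply: integrableS ih => //; apply: subset_itv; rewrite bnd_simp //; lra.
have hb2 := @integ_bound dS (pi + h) pi e ltac:(lra) ih2.
have : `|\int[mu]_(t in `]pi + h, pi]) dS t| <= e * - h.
  apply: le_trans (hb2 _) _; last by rewrite le_eqVlt; apply/orP; left; apply/eqP; ring.
  move=> t /andP[t1 t2].
  have [tpi|tpi] := ltP t pi; last first.
    have -> : t = pi by apply: le_anti; rewrite t2 tpi.
    by rewrite dpi normr0 ltW.
  have := Heta t; rewrite /= add0r normrN => /(_ _ tpi).
  by apply; rewrite ger0_norm; lra.
move=> hI.
rewrite ler_pdivrMr; last lra.
by [].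
Qed.
End S.

Lemma alg1 (R : realType) (P h a b : R) : h != 0 -> P + h != 0 -> P != 0 ->
  3 * ((a - b) / h * (P + h)^-1 - b * (P^-1 * (P + h)^-1)) =
  (3 * (a / (P + h) - 1) - 3 * (b / P - 1)) / h.
Proof. by move=> h0 ph0 p0; field; rewrite h0 ph0 p0. Qed.

Lemma alg2 (R : realType) (P b I : R) : P != 0 ->
  1 / 2 * I = - (3 * (b / P - 1) / P + 3 * (0 * P^-1 - b * (P^-1 * P^-1))
                  - 3 / 2 * I) / 3 - 1 / P.
Proof. by move=> p0; field; rewrite p0. Qed.

Lemma alg3 (R : realType) (r P I sg c s j T : R) : r != 0 -> P != 0 ->
  1 / 2 * I = - sg / 3 - 1 / P ->
  r * (c + (2 * r)^-1 * I * s + r^-1 * (sg * j + T)) - r * c + s / P =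
  (j - s / 3) * sg + T.
Proof.
move=> r0 p0 hI.
have -> : I = 2 * (- sg / 3 - 1 / P) by rewrite -hI; field.
by field; rewrite r0 p0.
Qed.

Unset Implicit Arguments.
Set Strict Implicit.

Theorem mainTheorem3 (R : realType) (q : R -> R)
    (Sh dS : R -> R -> R) (ds0 : R -> R) (sigma : nat -> R -> R) :
  L2_0pi q ->
  is_eigenvalue q 0 ->
  (* S(rho,.) solves -y'' + q y = rho^2 y, S(rho,0)=0, S'(rho,0)=1; dS = S' *)
  (forall rho, is_sol q (rho ^+ 2) (Sh rho) (dS rho) /\
               Sh rho 0 = 0 /\ dS rho 0 = 1) ->
  (* ds0 x is the (left) derivative at x of s0(x) = 3 (S(0,x)/x - 1) *)
  (let s0 := fun x => 3 * (Sh 0 x / x - 1) in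
   forall x, 0 < x <= pi ->
     (fun h => (s0 (x + h) - s0 x) / h) @ 0^'- --> ds0 x) ->
  (* sigma 0 is the given first NSBF coefficient *)
  (forall x, 0 < x <= pi ->
     sigma 0%N x = 3 * (Sh 0 x / x - 1) / x + ds0 x - 3 / 2 * integ 0 x q) ->
  (* NSBF representation of S'(rho,x) with coefficients sigma n *)
  (forall rho x, rho != 0 -> 0 < x <= pi ->
     (fun N => cos (rho * x) + (2 * rho)^-1 * integ 0 x q * sin (rho * x)
        + rho^-1 * \sum_(0 <= n < N) (-1) ^+ n * sigma n x
                        * sbessel n.*2.+1 (rho * x)) @ \oo --> dS rho x) ->
  (1 / 2 * integ 0 pi q = - sigma 0%N pi / 3 - 1 / pi) /\
  (forall rhok, 0 < rhok -> is_eigenvalue q (rhok ^+ 2) ->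
     (fun N => (sbessel 1 (rhok * pi) - sin (rhok * pi) / 3) * sigma 0%N pi
        + \sum_(1 <= n < N) (-1) ^+ n * sigma n pi
                             * sbessel n.*2.+1 (rhok * pi)) @ \oo
     --> - rhok * cos (rhok * pi) + sin (rhok * pi) / pi).

Proof.
move=> hq eig0 Hsol Hds0 Hsig Hnsbf.
have iq := int_q hq.
have dSpi : forall rho, is_eigenvalue q (rho ^+ 2) -> dS rho pi = 0.
  move=> rho [y [dy [sy [y0 [dypi ex]]]]].
  have [s [S0 dS0]] := Hsol rho.
  exact: eig_dS iq sy y0 dypi ex s S0 dS0.
have pi0 : (0:R) < pi := pi_gt0 R.
have d0 : dS 0 pi = 0.
  by apply: dSpi; rewrite expr2 mulr0.
have [[cS [cdS HS]] [S00 dS00]] := Hsol 0.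
have HS' : forall x, 0 <= x <= pi -> Sh 0 x = Sh 0 0 + integ 0 x (dS 0).
  by move=> x hx; case: (HS x hx).
have HQ := left_deriv0 cdS HS' d0.
set S0 := Sh 0 in HQ HS' Hds0 Hsig.
set Q := fun h => (S0 (pi + h) - S0 pi) / h in HQ.
have hid : (fun h : R => h) @ 0^'- --> (0:R) by apply: cvg_at_left_filter; exact: cvg_id.
have hp : (fun h : R => pi + h) @ 0^'- --> pi.
  rewrite -[X in _ --> X]addr0; apply: cvgD => //; exact: cvg_cst.
have hv : (fun h : R => (pi + h)^-1) @ 0^'- --> pi^-1.
  by apply: cvgV => //; rewrite gt_eqF.
have L : (fun h => 3 * (Q h * (pi + h)^-1 - S0 pi * (pi^-1 * (pi + h)^-1)))
    @ 0^'- --> 3 * (0 * pi^-1 - S0 pi * (pi^-1 * pi^-1)).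
  apply: cvgM; first exact: cvg_cst.
  apply: cvgB; first exact: cvgM.
  apply: cvgM; first exact: cvg_cst.
  apply: cvgM => //; exact: cvg_cst.
have Hd := Hds0 pi ltac:(by rewrite pi0 lexx).
rewrite /= in Hd.
have ev : \forall h \near 0^'-,
    3 * (Q h * (pi + h)^-1 - S0 pi * (pi^-1 * (pi + h)^-1)) =
    (3 * (S0 (pi + h) / (pi + h) - 1) - 3 * (S0 pi / pi - 1)) / h.
  exists pi => //= h hb hneg.
  rewrite /ball_ /= sub0r normrN ltr0_norm // in hb.
  have h0 : h != 0 by apply: ltr0_neq0.
  have ph0 : pi + h != 0 by apply: lt0r_neq0; lra.
  have p0 : (pi : R) != 0 by apply: lt0r_neq0.
  by rewrite /Q; apply: alg1.
have L' : (fun h => (3 * (S0 (pi + h) / (pi + h) - 1) - 3 * (S0 pi / pi - 1)) / h)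
    @ 0^'- --> 3 * (0 / pi - S0 pi * (pi^-1 / pi)).
  by apply: cvg_trans (near_eq_cvg ev) L.
have eq_ds0 := cvg_unique (@Rhausdorff R) Hd L'.
have part1 : 1 / 2 * integ 0 pi q = - sigma 0%N pi / 3 - 1 / pi.
  rewrite (Hsig pi ltac:(by rewrite pi0 lexx)) eq_ds0.
  have p0 : (pi : R) != 0 by apply: lt0r_neq0.
  by apply: alg2.
split => //.
move=> rk rk0 eigk.
have dk := dSpi rk eigk.
have r0 : rk != 0 by apply: lt0r_neq0.
have p0 : (pi : R) != 0 by apply: lt0r_neq0.
have H := Hnsbf rk pi r0 ltac:(by rewrite pi0 lexx).
rewrite dk in H.
set A := (fun N => _) in H.
have L2 : (fun N => rk * A N - rk * cos (rk * pi) + sin (rk * pi) / pi) @ \oo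
    --> rk * 0 - rk * cos (rk * pi) + sin (rk * pi) / pi.
  apply: cvgD; last exact: cvg_cst.
  apply: cvgB; last exact: cvg_cst.
  apply: cvgM => //; exact: cvg_cst.
have -> : - rk * cos (rk * pi) + sin (rk * pi) / pi =
          rk * 0 - rk * cos (rk * pi) + sin (rk * pi) / pi.
  by rewrite mulr0 sub0r mulNr.
apply: cvg_trans L2; apply: near_eq_cvg.
near=> N.
have N1 : (0 < N)%N by near: N; exists 1%N.
rewrite /A big_ltn // expr0 mul1r /=.
by apply: alg3.
Unshelve. all: by end_near.
Qed.
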